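(* Let $w=w_0w_1w_2\ldots$ be a one-sided infinite fixed word of a substitution on $\mathcal A=\{a_1,\dots,a_k\}$, let $\ell_1,\dots,\ell_k$ be positive rational interval lengths, and define $g(a_j)=\ell_j$. Let $0=t_0<t_1<\cdots$ be the geometric realisation of $w$ and $G(X)=\sum_{n\ge0}t_nX^n$. Then the sequence $(g(w_n))_{n\ge0}$ is not eventually periodic if and only if $G(X)$ is transcendental over $\mathbb{Q}(X)$.
   Context: The geometric realisation of $w$: replace each letter $w_n=a_j$ by a translated copy of an interval of length $\ell_j$, placed consecutively starting at the origin and proceeding to the right with no gaps, in the order $w_0,w_1,\dots$; $t_n$ is the left endpoint of the interval corresponding to $w_n$. A sequence is eventually periodic if there exist $N$, $d\ge1$ with $s_{n+d}=s_n$ for all $n\ge N$. Transcendence over $\mathbb{Q}(X)$ is meant inside $\mathbb{C}((X))$. *)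

(* Defs.v *)
From HB Require Import structures.
From mathcomp Require Import all_boot all_order all_algebra.
Set Implicit Arguments. Unset Strict Implicit. Unset Printing Implicit Defensive.
Import Order.TTheory GRing.Theory Num.Theory.
Local Open Scope ring_scope.

Definition nonerasing (k : nat) (sigma : 'I_k -> seq 'I_k) : Prop :=
  forall a, (0 < size (sigma a))%N.

Definition prefix (T : Type) (w : nat -> T) (n : nat) : seq T :=
  [seq w i | i <- iota 0 n].

(* w is a fixed point of sigma: sigma(w) = w, i.e. for every n the word
   sigma(w_0) ... sigma(w_{n-1}) is a prefix of w. *)
Definition is_fixed_word (k : nat) (sigma : 'I_k -> seq 'I_k) (w : nat -> 'I_k) : Prop :=
  forall n, let u := flatten [seq sigma a | a <- prefix w n] in
            u = prefix w (size u).

Definition eventually_periodic (T : Type) (s : nat -> T) : Prop :=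
  exists N d, (0 < d)%N /\ forall n, (N <= n)%N -> s (n + d)%N = s n.

Definition geom_real (k : nat) (l : 'I_k -> rat) (w : nat -> 'I_k) (n : nat) : rat :=
  \sum_(i < n) l (w i).

Definition pseries := nat -> rat.
Definition ps_mul (f g : pseries) : pseries :=
  fun n => \sum_(i < n.+1) f i * g (n - i)%N.
Definition ps_add (f g : pseries) : pseries := fun n => f n + g n.
Definition ps_zero : pseries := fun _ => 0.
Definition ps_one : pseries := fun n => if n == 0%N then 1 else 0.
Definition ps_pow (f : pseries) (i : nat) : pseries := iter i (ps_mul f) ps_one.
Definition ps_of_poly (p : {poly rat}) : pseries := fun n => p`_n.

(* evaluation P(X, F(X)) of P in Q[X][Y] at Y = F *)
Definition ps_eval (P : {poly {poly rat}}) (F : pseries) : pseries :=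
  \big[ps_add/ps_zero]_(i < size P) ps_mul (ps_of_poly P`_i) (ps_pow F i).

(* F algebraic over Q(X): a nonzero polynomial with coefficients in Q(X)
   (equivalently, after clearing denominators, in Q[X]) annihilates F. *)
Definition ps_algebraic (F : pseries) : Prop :=
  exists P : {poly {poly rat}}, P != 0 /\ forall n, ps_eval P F n = 0.

Definition ps_transcendental (F : pseries) : Prop := ~ ps_algebraic F.

(* Main.v *)
Require Import Defs.
From HB Require Import structures.
From mathcomp Require Import all_boot all_order all_algebra.
From mathcomp Require Import boolp zify ring.
Import Order.TTheory GRing.Theory Num.Theory.
Set Implicit Arguments. Unset Strict Implicit. Unset Printing Implicit Defensive.
Local Open Scope ring_scope.

Definition ser : Type := nat -> rat.
HB.instance Definition _ := Choice.on ser.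

Definition s0 : ser := fun _ => 0.
Definition sopp (f : ser) : ser := fun n => - f n.
Definition sadd (f g : ser) : ser := fun n => f n + g n.

Lemma saddA : associative sadd.
Proof. by move=> f g h; apply: funext => n; rewrite /sadd addrA. Qed.
Lemma saddC : commutative sadd.
Proof. by move=> f g; apply: funext => n; rewrite /sadd addrC. Qed.
Lemma sadd0 : left_id s0 sadd.
Proof. by move=> f; apply: funext => n; rewrite /sadd /s0 add0r. Qed.
Lemma saddN : left_inverse s0 sopp sadd.
Proof. by move=> f; apply: funext => n; rewrite /sadd /s0 /sopp addNr. Qed.
HB.instance Definition _ := GRing.isZmodule.Build ser saddA saddC sadd0 saddN.

Definition tr (n : nat) (f : ser) : {poly rat} := \poly_(i < n.+1) f i.

Lemma coef_trM n m f g : (n <= m)%N -> (tr m f * tr m g)`_n = ps_mul f g n.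
Proof.
move=> le; rewrite coefM /ps_mul; apply: eq_bigr => i _.
rewrite !coef_poly ifT ?ifT //.
  by rewrite ltnS (leq_trans (leq_subr _ _) le).
by rewrite ltnS (leq_trans _ le) // -ltnS.
Qed.

Lemma smulC : commutative ps_mul.
Proof.
move=> f g; apply: funext => n.
by rewrite -(coef_trM _ _ (leqnn n)) mulrC coef_trM.
Qed.

Lemma coef_tr n m f : (n <= m)%N -> (tr m f)`_n = f n.
Proof. by move=> le; rewrite coef_poly ltnS le. Qed.

Lemma eqmodM n (p q p' q' : {poly rat}) : (forall i, (i <= n)%N -> p`_i = p'`_i) ->
  (forall i, (i <= n)%N -> q`_i = q'`_i) -> (p * q)`_n = (p' * q')`_n.
Proof.
move=> hp hq; rewrite !coefM; apply: eq_bigr => i _.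
rewrite hp ?hq //; last by rewrite -ltnS.
exact: leq_subr.
Qed.

Lemma smulA : associative ps_mul.
Proof.
move=> f g h; apply: funext => n.
rewrite -(coef_trM (ps_mul f g) h (leqnn n)) -(coef_trM f (ps_mul g h) (leqnn n)).
transitivity ((tr n f * (tr n g * tr n h))`_n).
  apply: eqmodM => // i le; rewrite coef_tr // -(coef_trM _ _ le).
  by apply: eqmodM => j lej; rewrite coef_tr // (leq_trans lej).
rewrite mulrA; apply: eqmodM => // i le; rewrite coef_tr // -(coef_trM _ _ le).
by apply: eqmodM => j lej; rewrite coef_tr // (leq_trans lej).
Qed.

Lemma smul1 : left_id ps_one ps_mul.
Proof.
move=> f; apply: funext => n; rewrite /ps_mul big_ord_recl /= subn0 mul1r.
by rewrite big1 ?addr0 // => i _; rewrite /ps_one /= mul0r.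
Qed.

Lemma smulDl : left_distributive ps_mul sadd.
Proof.
move=> f g h; apply: funext => n; rewrite /ps_mul /sadd -big_split /=.
by apply: eq_bigr => i _; rewrite mulrDl.
Qed.

Lemma sone_neq0 : ps_one != s0.
Proof.
apply/eqP => /(congr1 (fun f : ser => f 0%N)); rewrite /ps_one /s0 /=.
by move/eqP; rewrite oner_eq0.
Qed.

HB.instance Definition _ := GRing.Zmodule_isComNzRing.Build ser
  smulA smulC smul1 smulDl sone_neq0.

Lemma serP (f g : ser) : (forall n, f n = g n) -> f = g.
Proof. by move=> h; apply: funext. Qed.

Definition emb (p : {poly rat}) : ser := fun n => p`_n.

Lemma emb_is_zmod : zmod_morphism emb.
Proof. by move=> p q; apply: serP => n; rewrite /emb coefB. Qed.
HB.instance Definition _ := GRing.isZmodMorphism.Build {poly rat} ser emb emb_is_zmod.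
Lemma emb_is_monoid : monoid_morphism emb.
Proof.
split; first by apply: serP => n; rewrite /emb coefC.
by move=> p q; apply: serP => n; rewrite /emb coefM.
Qed.
HB.instance Definition _ := GRing.isMonoidMorphism.Build {poly rat} ser emb emb_is_monoid.

Lemma embE p n : emb p n = p`_n. Proof. by []. Qed.
Lemma mulsE (f g : ser) n : (f * g) n = \sum_(i < n.+1) f i * g (n - i)%N.
Proof. by []. Qed.
Lemma addsE (f g : ser) n : (f + g) n = f n + g n. Proof. by []. Qed.
Lemma oppsE (f : ser) n : (- f) n = - f n. Proof. by []. Qed.
Lemma zerosE n : (0 : ser) n = 0. Proof. by []. Qed.
Lemma sumsE I (r : seq I) (P : pred I) (F : I -> ser) n :
  (\sum_(i <- r | P i) F i) n = \sum_(i <- r | P i) F i n.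
Proof.
elim: r => [|a r ih]; rewrite ?big_nil ?big_cons //.
by case: (P a) => //; rewrite addsE ih.
Qed.

Lemma emb_inj : injective emb.
Proof. by move=> p q /(congr1 (fun f : ser => f)) h; apply/polyP => i; move: (congr1 (fun f => f i) h). Qed.

Lemma sdom (f g : ser) : f != 0 -> g != 0 -> f * g != 0.
Proof.
move=> /eqP hf /eqP hg.
have [i hi] : exists i, f i != 0.
  apply: contrapT => h; apply: hf; apply: serP => n; apply/eqP/negPn/negP => nz; apply: h; by exists n.
have [j hj] : exists j, g j != 0.
  apply: contrapT => h; apply: hg; apply: serP => n; apply/eqP/negPn/negP => nz; apply: h; by exists n.
case: (ex_minnP (ex_intro (fun i => f i != 0) i hi)) => i0 hi0 mi.
case: (ex_minnP (ex_intro (fun i => g i != 0) j hj)) => j0 hj0 mj.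
apply/eqP => /(congr1 (fun h : ser => h (i0 + j0)%N)); rewrite mulsE zerosE.
have hi0' : (i0 < (i0 + j0).+1)%N by rewrite ltnS leq_addr.
rewrite (bigD1 (Ordinal hi0')) //= big1 ?addr0.
  by rewrite addKn => /eqP; rewrite mulf_eq0 (negbTE hi0) (negbTE hj0).
move=> [a ha] /= /eqP hne.
have : a != i0 by apply/eqP => e; apply: hne; apply: val_inj.
rewrite neq_ltn => /orP [lt | lt].
  case: (boolP (f a == 0)) => [/eqP -> | nz]; first by rewrite mul0r.
  by have := mi a nz; rewrite leqNgt lt.
case: (boolP (g (i0 + j0 - a)%N == 0)) => [/eqP -> | nz]; first by rewrite mulr0.
have := mj _ nz; rewrite leqNgt => /negP []; rewrite ltn_subLR; last by rewrite -ltnS.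
lia.
Qed.

Definition theta (f : ser) : ser := fun n => n%:R * f n.
Lemma thetaD f g : theta (f + g) = theta f + theta g.
Proof. by apply: serP => n; rewrite /theta !addsE mulrDr. Qed.
Lemma thetaN f : theta (- f) = - theta f.
Proof. by apply: serP => n; rewrite /theta !oppsE mulrN. Qed.
Lemma thetaB f g : theta (f - g) = theta f - theta g.
Proof. by rewrite thetaD thetaN. Qed.
Lemma thetaM f g : theta (f * g) = theta f * g + f * theta g.
Proof.
apply: serP => n; rewrite /theta addsE !mulsE mulr_sumr -big_split /=.
apply: eq_bigr => [[i hi]] _ /=.
have e : n = (i + (n - i))%N by rewrite subnKC // -ltnS.
rewrite {1}e natrD; ring.
Qed.
Lemma theta_sum I (r : seq I) (P : pred I) (F : I -> ser) :
  theta (\sum_(i <- r | P i) F i) = \sum_(i <- r | P i) theta (F i).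
Proof.
elim: r => [|a r ih]; rewrite ?big_nil ?big_cons //.
  by apply: serP => n; rewrite /theta zerosE mulr0.
by case: (P a) => //; rewrite thetaD ih.
Qed.
Lemma thetaMn f m : theta (f *+ m) = theta f *+ m.
Proof. elim: m => [|m ih]; rewrite ?mulr0n ?mulrS ?thetaD ?ih //.
by apply: serP => n; rewrite /theta zerosE mulr0.
Qed.
Lemma thetaX (f : ser) m : theta (f ^+ m) = (f ^+ m.-1 * theta f) *+ m.
Proof.
elim: m => [|m ih].
  apply: serP => n; rewrite /theta expr0 mulr0n zerosE; case: n => [|n]; first by rewrite mul0r.
  by change ((1 : ser) n.+1) with (ps_one n.+1); rewrite /ps_one /= mulr0.
rewrite exprS thetaM ih /=; case: m ih => [|m] ih.
  by rewrite !expr0 mulr0n mulr0 addr0 mulr1 mul1r.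
rewrite mulrnAr mulrA -exprS /= mulrS [theta f * _]mulrC.
by rewrite [in RHS]mulrS [in RHS]mulrS.
Qed.
Lemma theta_emb p : theta (emb p) = emb ('X * p^`()).
Proof.
apply: serP => n; rewrite /theta !embE mulrC coefXM coef_deriv.
case: n => [|n] //=; first by rewrite mulr0. by rewrite mulr_natr.
Qed.

Lemma ps_pow_exp F i : ps_pow F i = (F : ser) ^+ i.
Proof. elim: i => [|i ih] //=; by rewrite exprS -ih. Qed.

Definition ev (S : {poly {poly rat}}) (x : ser) : ser := (map_poly emb S).[x].

Lemma ps_evalE P F : ps_eval P F = ev P F.
Proof.
rewrite /ev (@horner_coef_wide _ (size P)); last exact: size_poly.
rewrite /ps_eval; apply: eq_bigr => i _; by rewrite coef_map ps_pow_exp.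
Qed.

Lemma evD S T x : ev (S + T) x = ev S x + ev T x.
Proof. by rewrite /ev rmorphD hornerD. Qed.
Lemma evB S T x : ev (S - T) x = ev S x - ev T x.
Proof. by rewrite /ev rmorphB hornerD hornerN. Qed.
Lemma evN S x : ev (- S) x = - ev S x.
Proof. by rewrite /ev rmorphN hornerN. Qed.
Lemma evM S T x : ev (S * T) x = ev S x * ev T x.
Proof. by rewrite /ev rmorphM hornerM. Qed.
Lemma evC c x : ev c%:P x = emb c.
Proof. by rewrite /ev map_polyC hornerC. Qed.
Lemma evX x : ev 'X x = x.
Proof. by rewrite /ev map_polyX hornerX. Qed.
Lemma evZ c S x : ev (c *: S) x = emb c * ev S x.
Proof. by rewrite -mul_polyC evM evC. Qed.
Lemma evMn S m x : ev (S *+ m) x = ev S x *+ m.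
Proof. by rewrite /ev rmorphMn hornerMn. Qed.
Lemma evXn S m x : ev (S ^+ m) x = ev S x ^+ m.
Proof. by rewrite /ev rmorphXn horner_exp. Qed.
Lemma ev0 x : ev 0 x = 0.
Proof. by rewrite /ev rmorph0 horner0. Qed.

Lemma ev_sum m (F : 'I_m -> {poly {poly rat}}) x :
  ev (\sum_i F i) x = \sum_i ev (F i) x.
Proof. by rewrite /ev rmorph_sum horner_sum. Qed.

Definition thX (S : {poly {poly rat}}) := map_poly (fun c => 'X * c^`()) S.

Lemma theta_ev S x : theta (ev S x) = ev (thX S) x + ev (S^`()) x * theta x.
Proof.
rewrite /ev (@horner_coef_wide _ (size S).+1) ?leqW ?size_poly //.
rewrite (@horner_coef_wide _ (size S).+1 (map_poly emb (thX S))); last first.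
  by rewrite (leq_trans (size_poly _ _)) // leqW // size_poly.
rewrite (@horner_coef_wide _ (size S) (map_poly emb (S^`()))); last first.
  by rewrite (leq_trans (size_poly _ _)) // (leq_trans (size_poly _ _)) // leq_pred.
rewrite theta_sum mulr_suml.
under eq_bigr do rewrite thetaM.
rewrite big_split /=; congr (_ + _).
  apply: eq_bigr => i _; rewrite coef_map /= theta_emb coef_map /= coef_map_id0 //.
  by rewrite deriv0 mulr0.
rewrite big_ord_recl /= thetaX mulr0n mulr0 add0r; apply: eq_bigr => i _.
rewrite thetaX !coef_map /= coef_deriv rmorphMn /bump /= add1n.
by rewrite add0n mulrnAr -!mulrnAl mulrA.
Qed.

Lemma size_le_coef (D : nzRingType) (p : {poly D}) n :
  (size p <= n.+1)%N -> p`_n = 0 -> (size p <= n)%N.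
Proof.
move=> hs hc; rewrite leqNgt; apply/negP => lt.
have e : size p = n.+1 by apply/eqP; rewrite eqn_leq hs; exact: lt.
have : lead_coef p == 0 by rewrite lead_coefE e hc.
by rewrite lead_coef_eq0 => /eqP p0; move: e; rewrite p0 size_poly0.
Qed.

Lemma lindep (D : idomainType) n : forall m (v : 'I_m -> {poly D}),
  (n < m)%N -> (forall i, size (v i) <= n)%N ->
  exists c : 'I_m -> D, (exists i, c i != 0) /\ \sum_i c i *: v i = 0.
Proof.
elim: n => [|n IH] m v hm hv.
  case: m hm v hv => // m _ v hv; exists (fun _ => 1); split; first by exists ord0; rewrite oner_eq0.
  by apply: big1 => i _; move: (hv i); rewrite size_poly_leq0 => /eqP ->; rewrite scaler0.
case: (boolP [forall i, (v i)`_n == 0]) => [/forallP h | ].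
  apply: IH; first exact: ltnW.
  by move=> i; apply: size_le_coef => //; exact/eqP.
rewrite negb_forall => /existsP [j hj].
case: m hm v hv j hj => // m hm v hv j hj.
set al := (v j)`_n.
pose u k := al *: v (lift j k) - (v (lift j k))`_n *: v j.
have [c' [[i0 hi0] hc']] : exists c' : 'I_m -> D, (exists i, c' i != 0) /\ \sum_i c' i *: u i = 0.
  apply: IH => // k; apply: size_le_coef.
    rewrite (leq_trans (size_polyD _ _)) // geq_max size_polyN.
    by rewrite !(leq_trans (size_scale_leq _ _)).
  by rewrite coefB !coefZ mulrC subrr.
pose c i := match unlift j i with Some k => c' k * al | None => - \sum_k c' k * (v (lift j k))`_n end.
exists c; split.
  by exists (lift j i0); rewrite /c liftK mulf_neq0.
rewrite (bigD1_ord j) //= /c unlift_none.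
under eq_bigr do rewrite liftK.
rewrite -[RHS]hc' scaleNr scaler_suml /u.
rewrite addrC -sumrN -big_split /=; apply: eq_bigr => k _.
by rewrite scalerBr !scalerA.
Qed.

Lemma emb_eq0 p : (emb p == 0) = (p == 0).
Proof.
apply/eqP/eqP => [h|->]; last exact: rmorph0.
by apply: emb_inj; rewrite h rmorph0.
Qed.

Lemma sexpf_neq0 (f : ser) m : f != 0 -> f ^+ m != 0.
Proof.
move=> nz; elim: m => [|m ih]; first by rewrite expr0 oner_eq0.
by rewrite exprS sdom.
Qed.

Section DFin.
Variable x : ser.
Definition inEv y := exists S, y = ev S x.
Lemma inE_ev S : inEv (ev S x). Proof. by exists S. Qed.
Lemma inED y z : inEv y -> inEv z -> inEv (y + z).
Proof. by move=> [S ->] [T ->]; exists (S + T); rewrite evD. Qed.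
Lemma inEM y z : inEv y -> inEv z -> inEv (y * z).
Proof. by move=> [S ->] [T ->]; exists (S * T); rewrite evM. Qed.
Lemma inEN y : inEv y -> inEv (- y).
Proof. by move=> [S ->]; exists (- S); rewrite evN. Qed.
Lemma inEMn y m : inEv y -> inEv (y *+ m).
Proof. by move=> [S ->]; exists (S *+ m); rewrite evMn. Qed.
Lemma inEX y m : inEv y -> inEv (y ^+ m).
Proof. by move=> [S ->]; exists (S ^+ m); rewrite evXn. Qed.

Variable Q : {poly {poly rat}}.
Hypothesis hQ : ev Q x = 0.
Let A := ev Q^`() x.
Let B := ev (thX Q) x.
Hypothesis hA : A != 0.

Lemma AthB : A * theta x = - B.
Proof.
have := theta_ev Q x; rewrite hQ.
have -> : theta 0 = 0 by apply: serP => n; rewrite /theta zerosE mulr0.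
by move/eqP; rewrite eq_sym addrC addr_eq0 mulrC => /eqP.
Qed.

Lemma inE_Atheta y : inEv y -> inEv (A * theta y).
Proof.
move=> [S ->]; rewrite theta_ev mulrDr mulrCA AthB.
by exists (Q^`() * thX S - S^`() * thX Q); rewrite evB !evM mulrN.
Qed.

Lemma inE_iter k : inEv (A ^+ (2 * k) * iter k theta x).
Proof.
elim: k => [|k ih]; first by rewrite muln0 expr0 mul1r; exists 'X; rewrite evX.
set e := A ^+ (2 * k) * iter k theta x in ih.
have h1 : A ^+ 2 * theta (A ^+ (2 * k)) * iter k theta x = (A * theta A) * e *+ (2 * k).
  case: k {ih} @e => [|k] e.
    rewrite muln0 !mulr0n; have -> : theta (A ^+ 0) = 0.
      by rewrite thetaX mulr0n.
    by rewrite mulr0 mul0r.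
  rewrite thetaX /e mulrnAr mulrnAl; congr (_ *+ _).
  have -> : (2 * k.+1 = (2 * k).+1.+1)%N by rewrite mulnS.
  rewrite /= exprS expr1 [A ^+ _.+2]exprS !mulrA; congr (_ * _); rewrite mulrAC (mulrAC A A) /=. done.
have h2 : A ^+ (2 * k.+1) * iter k.+1 theta x =
          A * (A * theta e) - (A * theta A) * e *+ (2 * k).
  rewrite -h1 /e thetaM mulrDr mulrDr addrAC -mulrA -mulrA mulrA -expr2 subrr add0r.
  by rewrite /= mulnS exprD expr2 !mulrA.
rewrite h2; apply: inED; last apply/inEN/inEMn.
  by apply: inEM; [exists Q^`() | exact: inE_Atheta].
by apply: inEM => //; apply: inE_Atheta; exists Q^`().
Qed.
End DFin.

Lemma reduceE x (Q : {poly {poly rat}}) y : Q != 0 -> ev Q x = 0 -> inEv x y ->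
  exists e (r : {poly {poly rat}}), (size r < size Q)%N /\ emb (lead_coef Q) ^+ e * y = ev r x.
Proof.
move=> nz hQ [S ->]; exists (Pdiv.Idomain.scalp S Q), (Pdiv.Idomain.modp S Q).
split; first exact: Pdiv.Idomain.ltn_modpN0.
have -> : emb (lead_coef Q) ^+ Pdiv.Idomain.scalp S Q = ev ((lead_coef Q ^+ Pdiv.Idomain.scalp S Q)%:P) x.
  by rewrite evC rmorphXn.
by rewrite -evM mul_polyC Pdiv.Idomain.divp_eq evD evM hQ mulr0 add0r.
Qed.

Lemma common x (Q : {poly {poly rat}}) (y : nat -> ser) m :
  (forall k, (k < m)%N -> exists e (r : {poly {poly rat}}), (size r < size Q)%N /\ emb (lead_coef Q) ^+ e * y k = ev r x) ->
  exists E (r : nat -> {poly {poly rat}}), forall k, (k < m)%N ->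
     (size (r k) < size Q)%N /\ emb (lead_coef Q) ^+ E * y k = ev (r k) x.
Proof.
elim: m => [|m ih] h; first by exists 0%N, (fun _ => 0).
have [E [r hr]] := ih (fun k hk => h k (ltnW hk)).
have [e [r' [hs' he']]] := h m (ltnSn m).
exists (E + e)%N, (fun k => if (k < m)%N then (lead_coef Q ^+ e) *: r k else (lead_coef Q ^+ E) *: r').
move=> k; rewrite ltnS leq_eqVlt => /orP [/eqP -> | lt].
  rewrite ltnn; split; first by rewrite (leq_ltn_trans (size_scale_leq _ _)).
  by rewrite evZ -he' rmorphXn exprD mulrA.
rewrite lt; have [hs he] := hr k lt; split; first by rewrite (leq_ltn_trans (size_scale_leq _ _)).
by rewrite evZ -he rmorphXn addnC exprD -mulrA.
Qed.

Lemma minimal_ann x : (exists P, P != 0 /\ ev P x = 0) ->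
  exists Q, [/\ Q != 0, ev Q x = 0 & ev Q^`() x != 0].
Proof.
move=> hex.
have hex' : exists n, `[< exists P : {poly {poly rat}}, [/\ P != 0, ev P x = 0 & size P = n] >].
  by case: hex => P [nz h]; exists (size P); apply/asboolP; exists P.
case: (ex_minnP hex') => n /asboolP [Q [nz hQ hs]] mn.
exists Q; split => //; apply/eqP => hA.
case: (boolP (Q^`() == 0)) => [/eqP d0 | dnz].
  have eQ : Q = (Q`_0)%:P.
    apply/polyP => i; rewrite coefC; case: i => [|i] //=.
    have := congr1 (fun p : {poly {poly rat}} => p`_i) d0; rewrite coef_deriv coef0 /= => /eqP.
    rewrite -mulr_natr mulf_eq0 -polyC_natr polyC_eq0 pnatr_eq0 orbF => /eqP //.
  move: hQ; rewrite eQ evC => /eqP; rewrite emb_eq0 => /eqP h0.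
  by move: nz; rewrite eQ h0 eqxx.
have := mn (size Q^`()) (introT (asboolP _) (ex_intro _ Q^`() (And3 dnz hA erefl))).
by rewrite leqNgt -hs lt_size_deriv.
Qed.

Lemma dfinite x : (exists P, P != 0 /\ ev P x = 0) ->
  exists m (c : 'I_m -> {poly rat}), (exists i, c i != 0) /\
     \sum_i emb (c i) * iter i theta x = 0.
Proof.
move=> /minimal_ann [Q [nz hQ hA]].
set A := ev Q^`() x in hA.
set d := (size Q).-1.
have hsQ : size Q = d.+1 by rewrite /d prednK // size_poly_gt0.
pose y k := A ^+ (2 * d) * iter k theta x.
have hy : forall k, (k < d.+1)%N -> inEv x (y k).
  move=> k hk; rewrite /y.
  have -> : (2 * d = 2 * (d - k) + 2 * k)%N by rewrite -mulnDr subnK // -ltnS.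
  by rewrite exprD -mulrA; apply: inEM; [apply: inEX; exists Q^`() | exact: inE_iter].
have [E [r hr]] := common (fun k hk => reduceE nz hQ (hy k hk)).
have hsz : forall i : 'I_d.+1, (size (r i) <= d)%N.
  by move=> i; have [h _] := hr i (ltn_ord i); move: h; rewrite hsQ.
have [c [[i0 hi0] hc]] := @lindep _ d d.+1 (fun i : 'I_d.+1 => r i) (ltnSn d) hsz.
exists d.+1, c; split; first by exists i0.
have := congr1 (fun S => ev S x) hc; rewrite /= ev0 ev_sum.
move=> h.
have h' : \sum_i emb (c i) * (emb (lead_coef Q) ^+ E * y i) = 0.
  by rewrite -[RHS]h; apply: eq_bigr => i _; rewrite evZ -(proj2 (hr _ (ltn_ord _))).
move: h'.
have -> : \sum_i emb (c i) * (emb (lead_coef Q) ^+ E * y i) =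
   (emb (lead_coef Q) ^+ E * A ^+ (2 * d)) * \sum_i emb (c i) * iter i theta x.
  rewrite mulr_sumr; apply: eq_bigr => i _; rewrite /y -[RHS]mulrA mulrCA; congr (_ * _); exact: mulrCA.
move=> /eqP h0; apply/eqP; apply: contraTeq h0 => nzS; apply: sdom.
  apply: sdom; last exact: sexpf_neq0.
  by apply: sexpf_neq0; rewrite emb_eq0 lead_coef_eq0.
by move: nzS; rewrite eqb_id.
Qed.



Lemma poly_inf_roots (p : {poly rat}) :
  (forall N, exists m, (N <= m)%N /\ p.[m%:R] = 0) -> p = 0.
Proof.
move=> h.
have hs : forall K, exists s : seq nat, [/\ size s = K, uniq s, all (fun m => p.[m%:R] == 0) s
           & exists M, all (fun m => m < M)%N s].
  elim => [|K [s [hs hu ha [M hM]]]]; first by exists [::]; split => //; exists 0%N.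
  have [m [hm hr]] := h M.
  exists (m :: s); split => /=; rewrite ?hs ?hr ?eqxx ?ha //.
    rewrite hu andbT; apply/negP => /(allP hM); by rewrite ltnNge hm.
  exists m.+1; rewrite /= ltnSn /=; apply/allP => y /(allP hM) /= lt.
  by rewrite ltnS ltnW // (leq_trans lt hm).
have [s [hs1 hu ha _]] := hs (size p).
apply: (@roots_geq_poly_eq0 _ _ [seq m%:R | m <- s]).
- by rewrite all_map; apply: sub_all ha => m /= /eqP h0; apply/eqP.
- by rewrite map_inj_uniq // => a b /eqP; rewrite eqr_nat => /eqP.
- by rewrite size_map hs1.
Qed.

Section FinRec.
Variables (k L : nat) (b : nat -> 'I_k) (g : 'I_k -> rat) (C : {poly rat})
  (D : nat -> {poly rat}) (N0 : nat).
Hypothesis hC : C != 0.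
Hypothesis hg : forall m m', g (b m) = g (b m') -> b m = b m'.
Hypothesis hrec : forall m, (N0 <= m)%N ->
  C.[m%:R] * g (b m) + \sum_(s < L) (D s).[m%:R] * g (b (m - s.+1)%N) = 0.

Definition win m : L.-tuple 'I_k := [tuple b (m - s.+1)%N | s < L].
Definition pr m := (win m, b m).
Definition infp (p : (L.-tuple 'I_k * 'I_k)%type) :=
  forall N, exists m, (N <= m)%N /\ pr m = p.

Lemma win_eq m1 m2 : win m1 = win m2 <-> forall s, (s < L)%N -> b (m1 - s.+1) = b (m2 - s.+1).
Proof.
split => [h s hs | h].
  by have := congr1 (fun t => tnth t (Ordinal hs)) h; rewrite !tnth_mktuple.
by apply: eq_from_tnth => s; rewrite !tnth_mktuple h.
Qed.

Lemma win_shift m1 m2 : win m1 = win m2 -> b m1 = b m2 -> win m1.+1 = win m2.+1.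
Proof.
move=> /win_eq h hb; apply/win_eq => [[|s]] hs; rewrite !subSS ?subn0 //.
exact: h (ltnW hs).
Qed.

Lemma finite_bound : exists N, forall p, ~ infp p -> forall m, (N <= m)%N -> pr m <> p.
Proof.
suff: forall s : seq (L.-tuple 'I_k * 'I_k)%type, exists N, forall p, p \in s -> ~ infp p ->
   forall m, (N <= m)%N -> pr m <> p.
  by case/(_ (enum (predT : pred (L.-tuple 'I_k * 'I_k)%type))) => N hN; exists N => p; apply: hN; rewrite mem_enum.
elim => [|p s [N hN]]; first by exists 0%N.
case: (pselect (infp p)) => hp.
  by exists N => q; rewrite inE => /orP [/eqP -> | /hN] //.
have [N' hN'] : exists N', forall m, (N' <= m)%N -> pr m <> p.
  apply: contrapT => hn; apply: hp => M; apply: contrapT => hM; apply: hn; exists M => m hm e.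
  by apply: hM; exists m.
exists (maxn N N') => q; rewrite inE => /orP [/eqP -> | /hN hq] hnq m hm.
  by apply: hN'; rewrite (leq_trans _ hm) // leq_maxr.
by apply: hq => //; rewrite (leq_trans _ hm) // leq_maxl.
Qed.

Definition Phi (t : L.-tuple 'I_k) y : {poly rat} :=
  C * (g y)%:P + \sum_(s < L) D s * (g (tnth t s))%:P.

Lemma infp_phi t y : infp (t, y) -> Phi t y = 0.
Proof.
move=> h; apply: poly_inf_roots => N; have [m [hm e]] := h (maxn N N0).
exists m; split; first by rewrite (leq_trans _ hm) // leq_maxl.
have ew := congr1 fst e; have eb := congr1 snd e; rewrite /= in ew eb.
rewrite /Phi hornerD hornerM hornerC horner_sum -eb -[RHS](hrec (leq_trans (leq_maxr _ _) hm)).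
congr (_ + _); apply: eq_bigr => s _; by rewrite hornerM hornerC -ew tnth_mktuple.
Qed.

Lemma infp_uniq t y y' : infp (t, y) -> infp (t, y') -> y = y'.
Proof.
move=> h h'.
have e : C * (g y - g y')%:P = 0.
  by rewrite polyCB mulrBr; apply/eqP; rewrite subr_eq0; apply/eqP;
    apply: (@addIr _ (\sum_(s < L) D s * (g (tnth t s))%:P));
    rewrite -/(Phi t y) -/(Phi t y') (infp_phi h) (infp_phi h').
move/eqP: e; rewrite mulf_eq0 (negbTE hC) /= polyC_eq0 subr_eq0 => /eqP e.
have [m [_ e1]] := h 0%N; have [m' [_ e2]] := h' 0%N.
have := congr1 snd e1; have := congr1 snd e2; rewrite /= => <- <-.
by apply: hg; move: e; rewrite -(congr1 snd e1 : b m = y) -(congr1 snd e2 : b m' = y').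
Qed.

Lemma fin_rec_periodic : eventually_periodic b.
Proof.
have [N hN] := finite_bound.
set N1 := maxn N N0.
have hinf : forall m, (N1 <= m)%N -> infp (pr m).
  move=> m hm; apply: contrapT => hn; by apply: (hN _ hn m) => //; rewrite (leq_trans _ hm) // leq_maxl.
have det : forall m1 m2, (N1 <= m1)%N -> (N1 <= m2)%N -> win m1 = win m2 -> b m1 = b m2.
  move=> m1 m2 h1 h2 e; have := hinf _ h2; rewrite /pr -e => h2'.
  exact: infp_uniq (hinf _ h1) h2'.
have run : forall m1 m2, (N1 <= m1)%N -> (N1 <= m2)%N -> win m1 = win m2 ->
   forall t, b (m1 + t) = b (m2 + t).
  move=> m1 m2 h1 h2 e t; suff : win (m1 + t) = win (m2 + t).
    by apply: det; rewrite (leq_trans _ (leq_addr _ _)).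
  elim: t => [|t ih]; first by rewrite !addn0.
  rewrite !addnS; apply: win_shift => //; apply: det => //; rewrite (leq_trans _ (leq_addr _ _)) //.
pose f (i : 'I_(#|{: L.-tuple 'I_k}|.+1)) := win (N1 + i).
have : ~~ injectiveb f.
  apply/negP => /injectiveP inj; have := @leq_card _ _ f inj; by rewrite card_ord ltnn.
move/injectivePn => [i [j hij e]].
wlog lt : i j hij e / (i < j)%N.
  move=> H; case: (ltngtP i j) => c; first exact: H c.
    by apply: (H j i) => //; rewrite eq_sym.
  by move: hij; rewrite -val_eqE /= c eqxx.
exists (N1 + i)%N, (j - i)%N; split; first by rewrite subn_gt0.
move=> n hn.
have := run (N1 + j)%N (N1 + i)%N (leq_addr _ _) (leq_addr _ _) (esym e) (n - (N1 + i))%N.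
have -> : (N1 + j + (n - (N1 + i)) = n + (j - i))%N by lia.
have -> : (N1 + i + (n - (N1 + i)) = n)%N by lia.
done.
Qed.
End FinRec.



Lemma coef_sumCX (R : nzRingType) m (a : 'I_m -> R) (j : 'I_m) :
  (\sum_(i < m) (a i)%:P * 'X^i)`_j = a j.
Proof.
rewrite coef_sum (bigD1 j) //= coefCM coefXn eqxx mulr1.
rewrite big1 ?addr0 // => i hi; rewrite coefCM coefXn.
have -> : (nat_of_ord j == i) = false by apply/negP => /eqP e; move: hi; rewrite -val_eqE /= e eqxx.
by rewrite mulr0.
Qed.

Lemma iter_thetaE i (x : ser) n : iter i theta x n = n%:R ^+ i * x n.
Proof. by elim: i => [|i ih] /=; rewrite ?expr0 ?mul1r // /theta ih exprS mulrA. Qed.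

Section Rec.
Variables (m : nat) (c : 'I_m -> {poly rat}) (x : ser).
Hypothesis hode : \sum_i emb (c i) * iter i theta x = 0.
Hypothesis hnz : exists i, c i != 0.

Definition Cj j : {poly rat} := \sum_(i < m) ((c i)`_j)%:P * 'X^i.

Lemma Cj_horner j t : (Cj j).[t] = \sum_(i < m) (c i)`_j * t ^+ i.
Proof. by rewrite horner_sum; apply: eq_bigr => i _; rewrite hornerCM hornerXn. Qed.

Lemma coef_rel n : \sum_(j < n.+1) (Cj j).[(n - j)%:R] * x (n - j)%N = 0.
Proof.
have := congr1 (fun f : ser => f n) hode; rewrite sumsE zerosE => h; rewrite -[RHS]h.
rewrite exchange_big /=; apply: eq_bigr => j _; rewrite Cj_horner mulr_suml.
by apply: eq_bigr => i _; rewrite iter_thetaE mulrA.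
Qed.

Definition J := (\max_(i < m) size (c i))%N.

Lemma Cj_big j : (J <= j)%N -> Cj j = 0.
Proof.
move=> hj; apply: big1 => i _; rewrite nth_default ?mul0r //.
by apply: leq_trans hj; apply: (@leq_bigmax _ (fun i => size (c i)) i).
Qed.

Lemma Cj_ex : exists j, Cj j != 0.
Proof.
case: hnz => i0 hi0; exists (size (c i0)).-1.
apply/negP => /eqP /(congr1 (fun p : {poly rat} => p`_i0)).
rewrite coef_sumCX coef0 => /eqP; rewrite -lead_coefE lead_coef_eq0.
exact/negP.
Qed.

Lemma rec_form : exists (C : {poly rat}) (L : nat) (D : nat -> {poly rat}) (N0 : nat),
  C != 0 /\ forall n, (N0 <= n)%N ->
  C.[n%:R] * x n + \sum_(s < L) (D s).[n%:R] * x (n - s.+1)%N = 0.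
Proof.
have [j hj] := Cj_ex.
case: (ex_minnP (ex_intro (fun j => Cj j != 0) j hj)) => j0 hj0 mj0.
have j0J : (j0 < J)%N by rewrite ltnNge; apply/negP => /Cj_big; apply/eqP.
exists (Cj j0), (J - j0.+1)%N, (fun s => Cj (s + j0.+1) \Po ('X - (s.+1)%:R%:P)), J.
split => // n hn.
rewrite -[RHS](coef_rel (n + j0)) -(big_mkord xpredT (fun j => (Cj j).[(n + j0 - j)%:R] * x (n + j0 - j)%N)).
rewrite (@big_cat_nat _ _ _ j0) /=; [| by [] | lia].
rewrite [X in _ = X + _]big_nat_cond [X in _ = X + _]big1 ?add0r; last first.
  move=> i /andP [/andP [_ hi] _]; have : Cj i == 0.
    by apply/negPn/negP => /mj0; rewrite leqNgt hi.
  by move/eqP ->; rewrite horner0 mul0r.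
rewrite (@big_cat_nat _ _ _ J j0) /=; [| lia | lia].
rewrite [X in _ = _ + X]big_nat_cond [X in _ = _ + X]big1 ?addr0; last first.
  by move=> i /andP [/andP [hi _] _]; rewrite Cj_big // horner0 mul0r.
rewrite [RHS]big_ltn // addnK [in RHS](_ : j0.+1 = 0 + j0.+1)%N // big_addn big_mkord.
congr (_ + _); apply: eq_bigr => s _.
have hs : (s < J - j0.+1)%N := ltn_ord s.
have e1 : (n + j0 - (s + j0.+1) = n - s.+1)%N by lia.
by rewrite e1 horner_comp hornerD hornerN hornerX hornerC natrB //; lia.
Qed.
End Rec.



Lemma embX_mul0 (f : ser) : (emb 'X * f) 0%N = 0.
Proof. by rewrite mulsE big_ord_recl big_ord0 addr0 embE coefX mul0r. Qed.
Lemma embX_mulS (f : ser) n : (emb 'X * f) n.+1 = f n.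
Proof.
rewrite mulsE big_ord_recl big_ord_recl embE coefX mul0r add0r /= embE coefX /= mul1r subn1 /=.
rewrite big1 ?addr0 // => i _; by rewrite embE coefX /= mul0r.
Qed.

Lemma ev_coef P x : ev P x = \sum_(i < size P) emb P`_i * x ^+ i.
Proof. rewrite /ev (@horner_coef_wide _ (size P)). 2: exact: size_poly. apply: eq_bigr => i _; by rewrite coef_map. Qed.

Section Main.
Variables (k : nat) (w : nat -> 'I_k) (l : 'I_k -> rat).
Let H : ser := fun n => l (w n).
Let G : ser := geom_real l w.

Lemma HG : emb 'X * H = emb (1 - 'X) * G.
Proof.
apply: serP => n; rewrite rmorphB rmorph1 mulrBl mul1r.
case: n => [|n]; rewrite addsE oppsE ?embX_mul0 ?embX_mulS.
  by rewrite /G /geom_real big_ord0 subr0.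
by rewrite /G /geom_real big_ord_recr /= addrAC subrr add0r.
Qed.

Lemma alg_H : (exists P, P != 0 /\ ev P G = 0) -> exists Q, Q != 0 /\ ev Q H = 0.
Proof.
move=> [P [nz hP]].
set s := size P.
exists (\sum_(i < s) (P`_i * 'X^i * (1 - 'X) ^+ (s - i))%:P * 'X^i); split.
  have hs : (s.-1 < s)%N by rewrite prednK // lt0n size_poly_eq0.
  apply/negP => /eqP /(congr1 (fun p : {poly {poly rat}} => p`_(Ordinal hs))).
  rewrite coef_sumCX coef0 /= => /eqP; rewrite !mulf_eq0 -lead_coefE lead_coef_eq0 (negbTE nz) /=.
have hX : (1 - 'X : {poly rat}) != 0.
    apply/eqP => /(congr1 (fun p : {poly rat} => p`_1)).
    by rewrite coefB coef1 coefX /= sub0r coef0 => /eqP; rewrite oppr_eq0 oner_eq0.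
  by rewrite !expf_eq0 polyX_eq0 (negbTE hX) !andbF.
rewrite ev_sum; transitivity (emb (1 - 'X) ^+ s * ev P G); last by rewrite hP mulr0.
rewrite ev_coef mulr_sumr; apply: eq_bigr => i _.
rewrite evM evC evXn evX !rmorphM !rmorphXn /=.
have e : emb 'X ^+ i * H ^+ i = (emb (1 - 'X) * G) ^+ i by rewrite -exprMn HG.
rewrite -[in RHS](subnKC (ltnW (ltn_ord i))) exprD.
rewrite mulrAC -(mulrA (emb P`_i)) e exprMn.
move: (emb P`_i) (emb (1 - 'X)) (G ^+ i) (emb (1 - 'X) ^+ (s - i)) => a b c d.
by move: (b ^+ i) => e0; ring.
Qed.


Lemma embXn_mul d (f : ser) n : (emb ('X^d) * f) n = if (d <= n)%N then f (n - d)%N else 0.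
Proof.
rewrite mulsE; case: leqP => h.
  have hd : (d < n.+1)%N by rewrite ltnS.
  rewrite (bigD1 (Ordinal hd)) //= embE coefXn eqxx mul1r big1 ?addr0 // => i hi.
  rewrite embE coefXn; have -> : (nat_of_ord i == d) = false.
    by apply/negP => /eqP e; move: hi; rewrite -val_eqE /= e eqxx.
  by rewrite mul0r.
apply: big1 => i _; rewrite embE coefXn; have -> : (nat_of_ord i == d) = false.
  by apply/negP => /eqP e; have := ltn_ord i; rewrite e ltnS leqNgt h.
by rewrite mul0r.
Qed.

Lemma ep_alg : eventually_periodic (fun n => l (w n)) -> ps_algebraic G.
Proof.
move=> [N [d [hd hper]]].
pose p : {poly rat} := \poly_(n < N + d) (H n - (if (d <= n)%N then H (n - d)%N else 0)).
have hp : emb (1 - 'X^d) * H = emb p.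
  apply: serP => n; rewrite rmorphB rmorph1 mulrBl mul1r addsE oppsE embXn_mul embE coef_poly.
  case: ltnP => // hn; rewrite ifT ?(leq_trans (leq_addl _ _) hn) //.
  have hn' : (N <= n - d)%N by rewrite leq_subRL ?(leq_trans (leq_addl _ _) hn) // addnC.
  by have := hper _ hn'; rewrite subnK ?(leq_trans (leq_addl _ _) hn) // /H => ->; rewrite subrr.
have hX : (1 - 'X : {poly rat}) != 0.
  apply/eqP => /(congr1 (fun p : {poly rat} => p`_1)).
  by rewrite coefB coef1 coefX /= sub0r coef0 => /eqP; rewrite oppr_eq0 oner_eq0.
have hXd : (1 - 'X^d : {poly rat}) != 0.
  apply/eqP => /(congr1 (fun p : {poly rat} => p`_d)).
  have d0 : (d == 0%N) = false by rewrite eqn0Ngt hd.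
  rewrite coefB coef1 coefXn eqxx coef0 d0 /=.
  by rewrite sub0r => /eqP; rewrite oppr_eq0 oner_eq0.
exists (((1 - 'X^d) * (1 - 'X))%:P * 'X - ('X * p)%:P); split.
  apply/negP => /eqP /(congr1 (fun q : {poly {poly rat}} => q`_1)).
  rewrite coefB coefMX coefC /= coefC /= subr0 coef0 => /eqP; rewrite mulf_eq0 (negbTE hX) (negbTE hXd).
  by [].
move=> n; rewrite ps_evalE evB evM !evC evX !rmorphM /= -mulrA -HG mulrCA hp.
by rewrite subrr zerosE.
Qed.

Definition rep (a : 'I_k) := odflt a [pick a' | l a' == l a].
Lemma rep_l a : l (rep a) = l a.
Proof. by rewrite /rep; case: pickP => [a' /eqP | _]. Qed.
Lemma rep_eq a a' : l a = l a' -> rep a = rep a'.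
Proof. move=> e; rewrite /rep e; case: pickP => [//|h]; by have := h a'; rewrite eqxx. Qed.

Lemma alg_ep : ps_algebraic G -> eventually_periodic (fun n => l (w n)).
Proof.
move=> [P [nz h]].
have hP : ev P G = 0 by apply: serP => n; rewrite -ps_evalE h.
have [Q [nzQ hQ]] := alg_H (ex_intro _ P (conj nz hP)).
have [m [c [hnz hode]]] := dfinite (ex_intro _ Q (conj nzQ hQ)).
have [C [L [D [N0 [hC hrec]]]]] := rec_form hode hnz.
pose b n := rep (w n).
have hg : forall m m', l (b m) = l (b m') -> b m = b m'.
  by move=> m1 m2; rewrite /b !rep_l; exact: rep_eq.
have hrec' : forall m, (N0 <= m)%N ->
    C.[m%:R] * l (b m) + \sum_(s < L) (D s).[m%:R] * l (b (m - s.+1)%N) = 0.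
  by move=> m1 hm; rewrite /b rep_l -[RHS](hrec _ hm); congr (_ + _); apply: eq_bigr => s _; rewrite rep_l.
have [N [d [hd hper]]] := fin_rec_periodic hC hg hrec'.
exists N, d; split => // n hn.
by rewrite -[l (w (n + d))]rep_l -[l (w n)]rep_l; congr (l _); apply: hper.
Qed.
End Main.

Unset Implicit Arguments.
Theorem mainTheorem13 (k : nat) (sigma : 'I_k -> seq 'I_k) (w : nat -> 'I_k)
    (l : 'I_k -> rat) :
  nonerasing sigma ->
  is_fixed_word sigma w ->
  (forall j, 0 < l j) ->
  ~ eventually_periodic (fun n => l (w n)) <->
  ps_transcendental (geom_real l w).
Proof.
move=> _ _ _; split.
  by move=> hn ha; apply: hn; apply: alg_ep.
by move=> ht he; apply: ht; apply: ep_alg.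
Qed.
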